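(* $\mathbf{M}$ is a lower triangular square matrix with $M_{i,i}=1$ for all $i\in[0,2^{m}-1]$. Thus $\mathbf{M}$ is invertible over $\mathbb{F}_2$.
   Context: Let $m\ge1$, $N=2^m$, $\mathbf{R}_m=\mathbb{F}_2[x_0,\dots,x_{m-1}]/(x_0^2-x_0,\dots,x_{m-1}^2-x_{m-1})$, and $\operatorname{ev}(Q)$ the evaluation vector of $Q\in\mathbf{R}_m$ at all points of $\mathbb{F}_2^m$. Let $\boldsymbol{G}_N=\begin{pmatrix}1&0\\1&1\end{pmatrix}^{\otimes m}$; row $i$ of $\boldsymbol{G}_N$ is $\operatorname{ev}$ of the monomial $x_0^{b_0}\cdots x_{m-1}^{b_{m-1}}$ with $(b_0,\dots,b_{m-1})$ the binary expansion of $2^m-1-i$. Let $\mathbf{P}\in\mathbb{F}_2^{N\times N}$ be upper triangular with ones on the diagonal (defining an upper polynomial polar code spanned by selected rows of $\mathbf{P}\boldsymbol{G}_N$). For a monomial $h$, $\check{h}=x_0\cdots x_{m-1}/h$ is its multiplicative complement; $f\mid g$ means the set of variables of $f$ is contained in that of $g$; $\operatorname{terms}(Q)$ is the set of monomials appearing in $Q$. The matrix $\mathbf{M}$ is defined by $M_{i,j}=|\{g\in\operatorname{terms}(P_j)\mid \check{g}\mid \check{f}\}| \pmod 2$, where $\operatorname{ev}(P_j)$ is row $j$ of $\mathbf{P}\boldsymbol{G}_N$ and $\operatorname{ev}(f)$ is row $i$ of $\boldsymbol{G}_N$. *)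

(* Defs.v *)
From mathcomp Require Import all_boot all_algebra.
Set Implicit Arguments. Unset Strict Implicit. Unset Printing Implicit Defensive.
Import GRing.Theory.
Local Open Scope ring_scope.

(* A monomial x_0^{b_0} ... x_{m-1}^{b_{m-1}} of R_m is identified with its
   set of variables {l | b_l = 1}.  An element Q of R_m (multilinear, over F_2)
   is identified with its coefficient function on monomials. *)
Definition Rm (m : nat) := {ffun {set 'I_m} -> 'F_2}.

(* the monomial whose evaluation is row i of G_N: exponents = binary
   expansion of 2^m - 1 - i *)
Definition row_mono (m : nat) (i : 'I_(2 ^ m)) : {set 'I_m} :=
  [set l : 'I_m | odd ((2 ^ m - 1 - i) %/ 2 ^ l)].

(* evaluation of a polynomial at a point of F_2^m, and the matrix G_N
   (given for reference; row i of G_N is ev (row_mono i)) *)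
Definition eval_at (m : nat) (Q : Rm m) (x : {set 'I_m}) : 'F_2 :=
  \sum_(g : {set 'I_m}) Q g * (g \subset x)%:R.
Definition G_N (m : nat) : 'M['F_2]_(2 ^ m) :=
  \matrix_(i, j) ((row_mono i) \subset (row_mono j) : bool)%:R.

(* P_j: the polynomial with ev(P_j) = row j of P G_N, i.e.
   P_j = sum_k P_{j,k} * (monomial of row k of G_N) *)
Definition Ppoly (m : nat) (P : 'M['F_2]_(2 ^ m)) (j : 'I_(2 ^ m)) : Rm m :=
  [ffun g => \sum_(k : 'I_(2 ^ m) | row_mono k == g) P j k].

Definition terms (m : nat) (Q : Rm m) : {set {set 'I_m}} := [set g | Q g != 0].

Definition mcompl (m : nat) (h : {set 'I_m}) : {set 'I_m} := ~: h.
Definition mdiv (m : nat) (f g : {set 'I_m}) : bool := f \subset g.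

Definition Mmat (m : nat) (P : 'M['F_2]_(2 ^ m)) : 'M['F_2]_(2 ^ m) :=
  \matrix_(i, j)
    (#|[set g in terms (Ppoly P j) | mdiv (mcompl g) (mcompl (row_mono i))]|)%:R.

(* Main.v *)
Require Import Defs.
From mathcomp Require Import all_boot all_algebra.
From mathcomp Require Import zify.
Local Open Scope ring_scope.

Lemma bits_le (m a b : nat) : (a < 2 ^ m)%N -> (b < 2 ^ m)%N ->
  (forall l, (l < m)%N -> odd (a %/ 2 ^ l) -> odd (b %/ 2 ^ l)) -> (a <= b)%N.
Proof.
elim: m a b => [|m IH] a b.
  by rewrite expn0 !ltnS !leqn0 => /eqP -> /eqP ->.
move=> ha hb H.
have h2 : (a./2 <= b./2)%N.
  apply: IH.
  - rewrite -divn2 ltn_divLR //; rewrite expnS in ha; lia.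
  - rewrite -divn2 ltn_divLR //; rewrite expnS in hb; lia.
  move=> l hl; rewrite -!divn2 -!divnMA -!expnS; by apply: H.
have h0 : odd a -> odd b by have := H 0%N (ltn0Sn _); rewrite expn0 !divn1.
rewrite -(odd_double_half a) -(odd_double_half b).
case: (odd a) h0; case: (odd b) => //= h0; try lia.
Qed.

Lemma row_mono_sub (m : nat) (i k : 'I_(2 ^ m)) :
  row_mono i \subset row_mono k -> (k <= i)%N.
Proof.
move/subsetP=> H.
have hN : (0 < 2 ^ m)%N by rewrite expn_gt0.
have : (2 ^ m - 1 - i <= 2 ^ m - 1 - k)%N.
  have := ltn_ord i; have := ltn_ord k => hk hi.
  apply: (@bits_le m); [lia|lia|idtac].
  move=> l hl ho.
  have := H (Ordinal hl); rewrite !inE /=; exact.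
have := ltn_ord i; have := ltn_ord k; lia.
Qed.

Lemma row_mono_inj (m : nat) : injective (@row_mono m).
Proof.
move=> i k e; apply/val_inj/eqP; rewrite eqn_leq.
by rewrite !row_mono_sub // e.
Qed.

Lemma terms_P (m : nat) (P : 'M['F_2]_(2 ^ m)) j g :
  g \in terms (Ppoly P j) -> exists k, row_mono k = g /\ P j k != 0.
Proof.
rewrite inE ffunE => H.
case: (boolP [exists k, (row_mono k == g) && (P j k != 0)]).
  by case/existsP=> k /andP[/eqP ? ?]; exists k.
rewrite negb_exists => /forallP Hk; exfalso; move/negP: H; apply.
rewrite big1 // => k /eqP e; have := Hk k; rewrite e eqxx /=.
by rewrite negbK => /eqP.
Qed.

Theorem lemma7 (m : nat) (hm : (1 <= m)%N) (P : 'M['F_2]_(2 ^ m))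
  (Pupper : forall i j : 'I_(2 ^ m), (j < i)%N -> P i j = 0)
  (Pdiag : forall i : 'I_(2 ^ m), P i i = 1) :
  (forall i j : 'I_(2 ^ m), (i < j)%N -> Mmat P i j = 0) /\
  (forall i : 'I_(2 ^ m), Mmat P i i = 1) /\
  Mmat P \in unitmx.
Proof.
have key : forall i j g, g \in terms (Ppoly P j) ->
    mdiv (mcompl g) (mcompl (row_mono i)) ->
    exists k : 'I_(2 ^ m), [/\ row_mono k = g, (j <= k)%N & (k <= i)%N].
  move=> i j g /terms_P [k [e nz]] hd; exists k; split => //.
    rewrite leqNgt; apply/negP => lt; move: nz; by rewrite Pupper // eqxx.
  apply: row_mono_sub; rewrite e -(setCK g) -(setCK (row_mono i)).
  by rewrite setCS.
have low : forall i j : 'I_(2 ^ m), (i < j)%N -> Mmat P i j = 0.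
  move=> i j lt; rewrite mxE.
  suff -> : [set g in terms (Ppoly P j) | mdiv (mcompl g) (mcompl (row_mono i))]
      = set0 by rewrite cards0.
  apply/setP=> g; rewrite in_set0 in_set; apply/negP => /andP[h1 h2].
  have [k [_ a b]] := key i j g h1 h2; lia.
have diag : forall i : 'I_(2 ^ m), Mmat P i i = 1.
  move=> i; rewrite mxE.
  suff -> : [set g in terms (Ppoly P i) | mdiv (mcompl g) (mcompl (row_mono i))]
      = [set row_mono i] by rewrite cards1.
  apply/setP=> g; rewrite in_set1 in_set; apply/idP/idP.
    move=> /andP[h1 h2]; have [k [e a b]] := key i i g h1 h2.
    suff ek : k = i by rewrite -e ek.
    by apply/val_inj/eqP; rewrite eqn_leq a b.
  move/eqP ->; rewrite /mdiv subxx andbT inE ffunE.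
  rewrite (big_pred1 i) ?Pdiag ?oner_eq0 //.
  by move=> k /=; apply/eqP/eqP => [/row_mono_inj|->].
split => //; split => //.
rewrite unitmxE det_trig; last by apply/is_trig_mxP.
by rewrite big1 ?unitr1 // => i _; rewrite diag.
Qed.
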